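(* Let $\mathcal{A}$ be a UFA with $n \ge 0$ states. Then its forward determinization has at most $\sqrt{n+1}\cdot 2^{n/2}$ states or its backward determinization has at most $\sqrt{n+1}\cdot 2^{n/2}$ states.
   Context: An NFA is a quintuple $\mathcal{A} = (Q,\Sigma,\delta,I,F)$ with $Q$ finite set of states, $\Sigma$ finite alphabet, $\delta \subseteq Q\times\Sigma\times Q$, initial states $I\subseteq Q$, accepting states $F \subseteq Q$. Write $q \xrightarrow{w} r$ if there is a run (sequence of transitions) from $q$ to $r$ reading $w$. A UFA is an NFA in which every word has at most one accepting run (run starting in $I$ and ending in $F$). For $S\subseteq Q$ and $w\in\Sigma^*$, $\delta(S,w) = \{r \mid \exists q\in S.\ q\xrightarrow{w} r\}$ and $\delta^{-1}(w,S) = \{r \mid \exists q \in S.\ r \xrightarrow{w} q\}$. The forward determinization of $\mathcal{A}$ has state set $\{\delta(I,w) \mid w\in\Sigma^*\}$ (the standard subset construction restricted to reachable subsets); the backward determinization has state set $\{\delta^{-1}(w,F)\mid w \in\Sigma^*\}$. *)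

(* Defs.v *)
From Stdlib Require Import Reals.
From mathcomp Require Import all_boot.
Set Implicit Arguments. Unset Strict Implicit. Unset Printing Implicit Defensive.

Section NFA.
Variables (Q Sigma : finType) (delta : Q -> Sigma -> Q -> bool).

Fixpoint is_run (q : Q) (w : seq Sigma) (qs : seq Q) : bool :=
  match w, qs with
  | [::], [::] => true
  | a :: w', q' :: qs' => delta q a q' && is_run q' w' qs'
  | _, _ => false
  end.

Definition accepting_run (I F : {set Q}) (w : seq Sigma) (q0 : Q) (qs : seq Q) : bool :=
  [&& q0 \in I, is_run q0 w qs & last q0 qs \in F].

Definition is_UFA (I F : {set Q}) : Prop :=
  forall w q0 qs q0' qs',
    accepting_run I F w q0 qs -> accepting_run I F w q0' qs' ->
    q0 = q0' /\ qs = qs'.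

Definition delta_fwd (S : {set Q}) (w : seq Sigma) : {set Q} :=
  foldl (fun (S : {set Q}) a => [set r | [exists q in S, delta q a r]]) S w.

Definition delta_bwd (w : seq Sigma) (S : {set Q}) : {set Q} :=
  foldr (fun a (S : {set Q}) => [set r | [exists q in S, delta r a q]]) S w.

End NFA.

Definition det_bound (n : nat) : R :=
  Rmult (sqrt (INR n.+1)) (Rpower 2 (Rdiv (INR n) 2)).

(* Main.v *)
Require Import Defs.
From Stdlib Require Import Reals Lra ClassicalEpsilon.
From mathcomp Require Import all_boot zify.
Set Implicit Arguments. Unset Strict Implicit. Unset Printing Implicit Defensive.

Section Kl.
Variable Q : finType.
Definition down (A : {set {set Q}}) := forall S T : {set Q}, S \in A -> T \subset S -> T \in A.
Definition C0 (A : {set {set Q}}) x := [set S in A | x \notin S].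
Definition C1 (A : {set {set Q}}) x := [set S : {set Q} | (x \notin S) && ((x |: S) \in A)].

Lemma split_card (A : {set {set Q}}) x : #|A| = #|C0 A x| + #|C1 A x|.
Proof.
have eA : A = C0 A x :|: [set S in A | x \in S].
  apply/setP=> S; rewrite !inE; by case: (S \in A); case: (x \in S).
rewrite {1}eA cardsU.
have -> : C0 A x :&: [set S in A | x \in S] = set0.
  apply/setP=> S; rewrite !inE; by case: (S \in A); case: (x \in S).
rewrite cards0 subn0; congr (_ + _).
have -> : [set S in A | x \in S] = (fun T => x |: T) @: C1 A x.
  apply/setP=> S; rewrite inE; apply/idP/imsetP.
  - case/andP=> SA xS; exists (S :\ x); last by rewrite setD1K.
    by rewrite inE setD11 /= setD1K.
  - case=> T; rewrite !inE => /andP[xT H] ->; by rewrite H setU11.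
rewrite card_in_imset // => T1 T2; rewrite !inE => /andP[x1 _] /andP[x2 _] E.
by rewrite -(setU1K x1) -(setU1K x2) E.
Qed.

Lemma C0I A B x : C0 (A :&: B) x = C0 A x :&: C0 B x.
Proof. apply/setP=> S; rewrite !inE; by case: (S \in A); case: (S \in B); case: (x \in S). Qed.
Lemma C1I A B x : C1 (A :&: B) x = C1 A x :&: C1 B x.
Proof. apply/setP=> S; rewrite !inE; by case: (x \in S); case: (x |: S \in A); case: (x |: S \in B). Qed.

Lemma C10 A x : down A -> C1 A x \subset C0 A x.
Proof. move=> dA; apply/subsetP=> S; rewrite !inE => /andP[-> H]; rewrite andbT; apply: (dA _ _ H); exact: subsetUr. Qed.

Lemma C0down A x : down A -> down (C0 A x).
Proof.
move=> dA S T; rewrite !inE => /andP[SA xS] TS; rewrite (dA _ _ SA TS) /=.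
by apply: contra xS; apply: (subsetP TS).
Qed.

Lemma C1down A x : down A -> down (C1 A x).
Proof.
move=> dA S T; rewrite !inE => /andP[xS H] TS.
rewrite (contra (subsetP TS x) xS) /=.
apply: (dA _ _ H); by apply: setUS.
Qed.

Lemma kleitman n : forall (D : {set Q}) (A B : {set {set Q}}), #|D| = n ->
  down A -> down B -> (forall S, S \in A -> S \subset D) -> (forall S, S \in B -> S \subset D) ->
  #|A| * #|B| <= 2 ^ n * #|A :&: B|.
Proof.
elim: n => [|n IH] D A B cD dA dB sA sB.
  have D0 : D = set0 by apply/eqP; rewrite -cards_eq0 cD.
  have sub1 : forall C : {set {set Q}}, (forall S, S \in C -> S \subset D) -> C \subset [set set0].
    move=> C sC; apply/subsetP=> S SC; rewrite inE; have := sC _ SC; by rewrite D0 subset0.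
  have cA : #|A| <= 1 by rewrite -(cards1 (@set0 Q)); apply: subset_leq_card; exact: sub1.
  have cB : #|B| <= 1 by rewrite -(cards1 (@set0 Q)); apply: subset_leq_card; exact: sub1.
  case: (set_0Vmem A) => [->|[S SA]]; first by rewrite cards0.
  case: (set_0Vmem B) => [->|[T TB]]; first by rewrite cards0 muln0.
  have : set0 \in A :&: B by rewrite inE (dA _ _ SA (sub0set _)) (dB _ _ TB (sub0set _)).
  move=> H; have : 0 < #|A :&: B| by apply/card_gt0P; exists set0.
  rewrite expn0; nia.
have [x xD] : exists x, x \in D by apply/card_gt0P; rewrite cD.
have cD' : #|D :\ x| = n by rewrite (cardsD1 x D) xD in cD; lia.
have sub0 : forall C : {set {set Q}}, (forall S, S \in C -> S \subset D) ->
   forall S, S \in C0 C x -> S \subset D :\ x.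
  move=> C sC S; rewrite inE => /andP[SC xS]; apply/subsetP=> y yS.
  rewrite !inE (subsetP (sC _ SC) _ yS) andbT; apply: contraNneq xS => <-; done.
have sub1 : forall C : {set {set Q}}, down C -> (forall S, S \in C -> S \subset D) ->
   forall S, S \in C1 C x -> S \subset D :\ x.
  move=> C dC sC S SC; apply: (sub0 C sC); exact: (subsetP (C10 x dC)).
have H0 := IH _ _ _ cD' (C0down (x:=x) dA) (C0down (x:=x) dB) (sub0 _ sA) (sub0 _ sB).
have H1 := IH _ _ _ cD' (C1down (x:=x) dA) (C1down (x:=x) dB) (sub1 _ dA sA) (sub1 _ dB sB).
have L1 := subset_leq_card (C10 x dA).
have L2 := subset_leq_card (C10 x dB).
rewrite (split_card A x) (split_card B x) (split_card (A :&: B) x) C0I C1I expnS.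
rewrite -C0I -C1I in H0 H1 *.
move: H0 H1 L1 L2.
set a0 := #|C0 A x|; set a1 := #|C1 A x|; set b0 := #|C0 B x|; set b1 := #|C1 B x|.
set c0 := #|C0 (A :&: B) x|; set c1 := #|C1 (A :&: B) x|; set p := 2 ^ n.
move=> H0 H1 L1 L2.
clearbody a0 a1 b0 b1 c0 c1 p.
have [d ?] : exists d, a0 = a1 + d by exists (a0 - a1); lia.
have [e ?] : exists e, b0 = b1 + e by exists (b0 - b1); lia.
subst a0 b0. nia.
Qed.
End Kl.

Section Aut.
Variables (Q Sigma : finType) (delta : Q -> Sigma -> Q -> bool).

Lemma run_size q w qs : is_run delta q w qs -> size qs = size w.
Proof.
elim: w q qs => [|a w IH] q [|q' qs] //= /andP[_ H]; by rewrite (IH _ _ H).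
Qed.

Lemma run_cat q u v qs qs' : is_run delta q u qs -> is_run delta (last q qs) v qs' ->
  is_run delta q (u ++ v) (qs ++ qs').
Proof.
elim: u q qs => [|a u IH] q [|q1 qs] //= /andP[d H] H'; by rewrite d (IH _ _ H H').
Qed.

Lemma fwd_mem S w q : q \in delta_fwd delta S w ->
  exists q0 qs, [/\ q0 \in S, is_run delta q0 w qs & last q0 qs = q].
Proof.
elim: w S => [|a w IH] S /=.
  by move=> qS; exists q, [::].
move=> /IH [q1 [qs [H1 H2 H3]]].
move: H1; rewrite inE => /existsP[q0 /andP[q0S d]].
by exists q0, (q1 :: qs); rewrite /= d H2.
Qed.

Lemma bwd_mem S w q : q \in delta_bwd delta w S ->
  exists qs, is_run delta q w qs /\ last q qs \in S.
Proof.
elim: w q => [|a w IH] q /=.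
  by move=> qS; exists [::].
rewrite inE => /existsP[q1 /andP[/IH [qs [H1 H2]] d]].
by exists (q1 :: qs); rewrite /= d H1.
Qed.

Lemma inter1 I F u v : is_UFA delta I F ->
  #|delta_fwd delta I u :&: delta_bwd delta v F| <= 1.
Proof.
move=> U; apply/card_le1_eqP => q q'; rewrite !inE => /andP[f b] /andP[f' b'].
have [q0 [qs [i r l]]] := fwd_mem f.
have [q0' [qs' [i' r' l']]] := fwd_mem f'.
have [ps [rp lp]] := bwd_mem b.
have [ps' [rp' lp']] := bwd_mem b'.
have A1 : accepting_run delta I F (u ++ v) q0 (qs ++ ps).
  by rewrite /accepting_run i run_cat ?l // last_cat l.
have A2 : accepting_run delta I F (u ++ v) q0' (qs' ++ ps').
  by rewrite /accepting_run i' run_cat ?l' // last_cat l'.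
have [e1 e2] := U _ _ _ _ _ A1 A2.
have sz : size qs = size qs' by rewrite (run_size r) (run_size r').
have : take (size qs) (qs ++ ps) = take (size qs) (qs' ++ ps') by rewrite e2.
rewrite take_size_cat // take_size_cat // => eq.
by rewrite -l -l' eq e1.
Qed.
End Aut.
Section RP.

Local Open Scope R_scope.
Lemma INR_expn2 n : INR (2 ^ n) = pow 2 n.
Proof.
elim: n => [|n IH] //; rewrite expnS mult_INR IH /=; lra.
Qed.

Lemma realpart m n : (m * m <= 2 ^ n * n.+1)%N -> Rle (INR m) (det_bound n).
Proof.
move=> H.
have H' : Rle (Rmult (INR m) (INR m)) (Rmult (pow 2 n) (INR n.+1)).
  rewrite -mult_INR -INR_expn2 -mult_INR; apply: le_INR; exact/leP.
have P1 : (0 <= sqrt (INR n.+1)) by apply: sqrt_pos.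
have P2 : (0 < Rpower 2 (INR n / 2)) by rewrite /Rpower; apply: exp_pos.
have E : Rmult (det_bound n) (det_bound n) = Rmult (pow 2 n) (INR n.+1).
  rewrite /det_bound.
  have -> : (sqrt (INR n.+1) * Rpower 2 (INR n / 2) * (sqrt (INR n.+1) * Rpower 2 (INR n / 2)) =
     (sqrt (INR n.+1) * sqrt (INR n.+1)) * (Rpower 2 (INR n / 2) * Rpower 2 (INR n / 2))) by ring.
  rewrite sqrt_sqrt; last by apply: pos_INR.
  rewrite -Rpower_plus.
  have -> : (INR n / 2 + INR n / 2 = INR n) by field.
  rewrite Rpower_pow; [ring | lra].
have P0 := pos_INR m.
have Pd : (0 <= det_bound n) by rewrite /det_bound; nra.
nra.
Qed.
End RP.

Definition pb (P : Prop) : bool := if excluded_middle_informative P then true else false.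
Lemma pbP (P : Prop) : pb P <-> P.
Proof. rewrite /pb; case: excluded_middle_informative => //. Qed.

Section Fin.
Variable Q : finType.
Definition dclose (X : {set {set Q}}) := [set T : {set Q} | [exists S in X, T \subset S]].
Lemma dclose_down (X : {set {set Q}}) : down (dclose X).
Proof.
move=> S T; rewrite !inE => /existsP[U /andP[UX SU]] TS; apply/existsP; exists U.
by rewrite UX (subset_trans TS SU).
Qed.
Lemma dclose_sub (X : {set {set Q}}) : X \subset dclose X.
Proof. apply/subsetP=> S SX; rewrite inE; apply/existsP; exists S; by rewrite SX subxx. Qed.

Lemma small_sets : #|[set T : {set Q} | #|T| <= 1]| <= #|Q|.+1.
Proof.
have sub : [set T : {set Q} | #|T| <= 1] \subset set0 |: [set [set q] | q : Q].
  apply/subsetP=> T; rewrite !inE leq_eqVlt ltnS leqn0 => /orP[/cards1P [q ->]|/eqP/cards0_eq ->].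
    by apply/orP; right; apply/imsetP; exists q.
  by rewrite eqxx.
apply: (leq_trans (subset_leq_card sub)); rewrite cardsU1.
rewrite -add1n; apply: leq_add; [exact: leq_b1 | exact: leq_imset_card].
Qed.

Lemma combi (Xf Xb : {set {set Q}}) :
  (forall S T, S \in Xf -> T \in Xb -> #|S :&: T| <= 1) ->
  #|Xf| * #|Xb| <= 2 ^ #|Q| * #|Q|.+1.
Proof.
move=> H.
have K := @kleitman Q #|Q| [set: Q] (dclose Xf) (dclose Xb) (cardsT Q) (@dclose_down Xf) (@dclose_down Xb)
   (fun S _ => subsetT S) (fun S _ => subsetT S).
have L : dclose Xf :&: dclose Xb \subset [set T : {set Q} | #|T| <= 1].
  apply/subsetP=> T; rewrite !inE => /andP[/existsP[S /andP[SX TS]] /existsP[S' /andP[SX' TS']]].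
  apply: leq_trans (H _ _ SX SX'); apply: subset_leq_card; by rewrite subsetI TS TS'.
have L1 := subset_leq_card (dclose_sub Xf).
have L2 := subset_leq_card (dclose_sub Xb).
have L3 := leq_trans (subset_leq_card L) small_sets.
apply: leq_trans (leq_mul L1 L2) _; apply: leq_trans K _; by rewrite leq_mul2l L3 orbT.
Qed.
End Fin.

Theorem mainTheorem2 (Q Sigma : finType) (delta : Q -> Sigma -> Q -> bool)
  (I F : {set Q}) :
  is_UFA delta I F ->
  (exists X : {set {set Q}},
     (forall S, S \in X <-> exists w, S = delta_fwd delta I w) /\
     Rle (INR #|X|) (det_bound #|Q|)) \/
  (exists X : {set {set Q}},
     (forall S, S \in X <-> exists w, S = delta_bwd delta w F) /\
     Rle (INR #|X|) (det_bound #|Q|)).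
Proof.
move=> U.
set Xf := [set S : {set Q} | pb (exists w, S = delta_fwd delta I w)].
set Xb := [set S : {set Q} | pb (exists w, S = delta_bwd delta w F)].
have Hf : forall S, S \in Xf <-> exists w, S = delta_fwd delta I w.
  by move=> S; rewrite inE; apply: pbP.
have Hb : forall S, S \in Xb <-> exists w, S = delta_bwd delta w F.
  by move=> S; rewrite inE; apply: pbP.
have C := @combi Q Xf Xb.
have C' : #|Xf| * #|Xb| <= 2 ^ #|Q| * #|Q|.+1.
  apply: C => S T /Hf [u ->] /Hb [v ->]; exact: inter1.
case: (leqP #|Xf| #|Xb|) => le.
  left; exists Xf; split => //; apply: realpart.
  apply: leq_trans C'; exact: leq_mul.
right; exists Xb; split => //; apply: realpart.
apply: leq_trans C'; apply: leq_mul => //; exact: ltnW.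
Qed.
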